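(* A general ring $I$ is strongly regular if and only if $I$ is quasipolar and $QN(I)=\{0\}$.
   Context: A general ring is an associative ring not necessarily having an identity. For $p,q\in I$, $p*q=p+q-pq$; $Q(I)=\{q\in I\mid p*q=0=q*p \text{ for some } p\in I\}$; $\mathrm{comm}(a)=\{x\in I\mid xa=ax\}$, $\mathrm{comm}^2(a)=\{x\in I\mid xy=yx\text{ for all }y\in\mathrm{comm}(a)\}$; $QN(I)=\{q\in I\mid qx\in Q(I)\text{ for every }x\in\mathrm{comm}(q)\}$. An element $a\in I$ is quasipolar in $I$ if there is an idempotent $p=p^2\in\mathrm{comm}^2(a)$ with $a+p\in Q(I)$ and $a-ap\in QN(I)$; $I$ is quasipolar if every element is. An element $a$ is strongly regular if $a=aba$ for some $b\in I$ with $ab=ba$; $I$ is strongly regular if every element is. *)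

(* Defs.v *)
From HB Require Import structures.
From mathcomp Require Import all_boot all_order all_algebra.
Set Implicit Arguments. Unset Strict Implicit. Unset Printing Implicit Defensive.
Import GRing.Theory.
Local Open Scope ring_scope.

Record genRing := GenRing {
  carrier :> zmodType;
  gmul : carrier -> carrier -> carrier;
  gmulA : forall x y z, gmul x (gmul y z) = gmul (gmul x y) z;
  gmulDl : forall x y z, gmul (x + y) z = gmul x z + gmul y z;
  gmulDr : forall x y z, gmul x (y + z) = gmul x y + gmul x z
}.

Section Defs.
Variable I : genRing.
Local Notation "x ** y" := (gmul x y) (at level 40, left associativity).

Definition circ (p q : I) : I := p + q - p ** q.

Definition Qset (q : I) : Prop := exists p : I, circ p q = 0 /\ circ q p = 0.

Definition commset (a x : I) : Prop := x ** a = a ** x.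

Definition comm2set (a x : I) : Prop :=
  forall y : I, commset a y -> x ** y = y ** x.

Definition QNset (q : I) : Prop := forall x : I, commset q x -> Qset (q ** x).

Definition quasipolar_elt (a : I) : Prop :=
  exists p : I, [/\ p ** p = p, comm2set a p, Qset (a + p) & QNset (a - a ** p)].

Definition quasipolar : Prop := forall a : I, quasipolar_elt a.

Definition strongly_regular_elt (a : I) : Prop :=
  exists b : I, a = a ** b ** a /\ a ** b = b ** a.

Definition strongly_regular : Prop := forall a : I, strongly_regular_elt a.

End Defs.

(* Main.v *)
Require Import Defs.
From mathcomp Require Import all_boot all_order all_algebra.
Import GRing.Theory.
Local Open Scope ring_scope.

Section H.
Variable I : genRing.
Local Notation "x ** y" := (gmul x y) (at level 40, left associativity).
Implicit Types x y z : I.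

Lemma m0r x : 0 ** x = 0.
Proof. by apply: (addrI (0 ** x)); rewrite -gmulDl !addr0. Qed.
Lemma mr0 x : x ** 0 = 0.
Proof. by apply: (addrI (x ** 0)); rewrite -gmulDr !addr0. Qed.
Lemma mNr x y : (- x) ** y = - (x ** y).
Proof. by apply: (addrI (x ** y)); rewrite -gmulDl !subrr m0r. Qed.
Lemma mrN x y : x ** (- y) = - (x ** y).
Proof. by apply: (addrI (x ** y)); rewrite -gmulDr !subrr mr0. Qed.
Lemma mBl x y z : (x - y) ** z = x ** z - y ** z.
Proof. by rewrite gmulDl mNr. Qed.
Lemma mBr x y z : z ** (x - y) = z ** x - z ** y.
Proof. by rewrite gmulDr mrN. Qed.

Lemma circE (p q : I) : circ p q = 0 <-> p + q = p ** q.
Proof. by rewrite /circ; split => [/eqP|->]; [rewrite subr_eq0 => /eqP|rewrite subrr]. Qed.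

Lemma QN0 : QNset (0 : I).
Proof. move=> x _; exists 0; rewrite m0r /circ m0r; split; apply/eqP; by rewrite !addr0 subr0. Qed.

Lemma comm_quasi (s x q : I) : x ** s = s ** x -> circ q s = 0 -> circ s q = 0 ->
  x ** q = q ** x.
Proof.
move=> xs /circE qs /circE sq.
have h1 : q ** x ** s = q ** x + s ** x by rewrite -gmulA xs gmulA -qs gmulDl.
have h2 : q ** x ** s ** q = q ** x ** q + s ** x ** q by rewrite h1 gmulDl.
have h3 : q ** x ** s ** q = q ** x ** s + q ** x ** q
  by rewrite -gmulA -sq gmulDr addrC.
have h4 : s ** x ** q = q ** x + s ** x.
  by apply: (addrI (q ** x ** q)); rewrite -h2 h3 h1 addrC.
have h5 : s ** x ** q = x ** s + x ** q by rewrite -xs -gmulA -sq gmulDr.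
by apply: (addrI (x ** s)); rewrite -h5 h4 xs addrC.
Qed.

Lemma reduced (SR : strongly_regular I) (a : I) : a ** a = 0 -> a = 0.
Proof.
move=> aa; have [b [E C]] := SR a.
by rewrite E C -gmulA aa mr0.
Qed.

Lemma idem_central (SR : strongly_regular I) (e x : I) : e ** e = e -> e ** x = x ** e.
Proof.
move=> ee.
set u := e ** x - e ** x ** e.
have eu : e ** u = u by rewrite /u mBr !gmulA ee.
have ue : u ** e = 0 by rewrite /u mBl -[X in _ - X]gmulA ee subrr.
have u0 : u = 0 by apply: (reduced SR); rewrite -{2}eu gmulA ue m0r.
set v := x ** e - e ** x ** e.
have ve : v ** e = v by rewrite /v mBl -[X in _ - X]gmulA -gmulA ee.
have ev : e ** v = 0 by rewrite /v mBr !gmulA ee subrr.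
have v0 : v = 0 by apply: (reduced SR); rewrite -{1}ve -gmulA ev mr0.
by move/eqP: u0; rewrite subr_eq0 => /eqP ->; move/eqP: v0; rewrite subr_eq0 => /eqP ->.
Qed.


Lemma SR_QN (SR : strongly_regular I) (q : I) : QNset q -> q = 0.
Proof.
move=> hq; have [b [E C]] := SR q.
have [r [/circE h _]] := hq b (esym C).
have ee : q ** b ** (q ** b) = q ** b by rewrite gmulA -E.
have e0 : q ** b = 0.
  have := congr1 (fun t => t ** (q ** b)) h => /=.
  rewrite gmulDl ee -gmulA ee => h'.
  by apply: (addrI (r ** (q ** b))); rewrite h' addr0.
by rewrite E e0 m0r.
Qed.

Lemma SR_qp (SR : strongly_regular I) (a : I) : quasipolar_elt a.
Proof.
have [b [E C]] := SR a.
set p := a ** b.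
have pp : p ** p = p by rewrite /p gmulA -E.
have pc : forall y, p ** y = y ** p by move=> y; apply: idem_central.
set c := b ** a ** b.
have pa : p ** a = a by rewrite /p -E.
have ap : a ** p = a by rewrite -pc pa.
have ca : c ** a = p by rewrite /c -gmulA -C -/p pp.
have ac : a ** c = p by rewrite /c gmulA (gmulA a b a) -E.
have cE : c = p ** b by rewrite /c -C.
have cp : c ** p = c by rewrite cE -pc gmulA pp.
have pc' : p ** c = c by rewrite pc cp.
exists p; split; first exact: pp.
- by move=> y _; apply: pc.
- exists (p + c); split; apply/circE.
  + rewrite gmulDl !gmulDr pa pp ca cp.
    by rewrite addrC.
  + rewrite gmulDl !gmulDr ap ac pp pc'.
    by [].
- by rewrite ap subrr; apply: QN0.
Qed.

Lemma QP_SR (QP : quasipolar I) (QN : forall q : I, QNset q -> q = 0) (a : I) :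
  strongly_regular_elt a.
Proof.
have [p [pp p2 [q [/circE h1 /circE h2]] hn]] := QP a.
have pa : p ** a = a ** p by apply: p2.
have ap : a ** p = a by apply/eqP; rewrite eq_sym -subr_eq0; apply/eqP/QN.
have qa : a ** q = q ** a.
  apply: (@comm_quasi (a + p) a q); try apply/circE => //.
  by rewrite gmulDl gmulDr pa.
have qp : p ** q = q ** p.
  apply: (@comm_quasi (a + p) p q); try apply/circE => //.
  by rewrite gmulDl gmulDr p2.
exists (p ** q - p); split.
- have h3 : q ** a + q ** p = q + a + p by rewrite -gmulDr -h1 addrA.
  have h4 : a ** q ** a + a ** q = a ** q + a ** a + a.
    have := congr1 (fun t => a ** t) h3 => /=.
    by rewrite !gmulDr !gmulA -(gmulA a q p) -qp gmulA ap.
  have h5 : a ** q ** a = a ** a + a.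
    by apply: (@addIr _ (a ** q)); rewrite h4 -addrA addrC.
  by rewrite mBr mBl gmulA ap h5 addrC addKr.
- by rewrite mBr mBl gmulA ap -gmulA -qa gmulA pa ap.
Qed.

End H.

Theorem proposition2p18 (I : genRing) :
  strongly_regular I <->
  (quasipolar I /\ (forall q : I, QNset q <-> q = 0)).
Proof.
split.
- move=> SR; split; first by move=> a; apply: SR_qp.
  by move=> q; split; [apply: SR_QN|move=> ->; apply: QN0].
- move=> [QP QN] a; apply: QP_SR => // q; apply QN.
Qed.
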